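(* Let $G$ be a finite bipartite multigraph and let $d_v$ denote the degree of $v\in V(G)$. Assume each vertex $v$ is assigned a nonnegative integer $u_v$ with $2u_v\le d_v$. Then there exist a subset of edges $W\subset E(G)$ and an orientation of the edges of $W$ such that the outdegree (with respect to the oriented edges of $W$) of each vertex $v$ is exactly $u_v$.
   Context: In a multigraph, multiple edges between the same pair of vertices are allowed and each contributes to the degree. *)

(* Defs.v *)
From mathcomp Require Import all_boot.
Set Implicit Arguments. Unset Strict Implicit. Unset Printing Implicit Defensive.

(* A finite multigraph: finite vertex type V, finite edge type E, and each
   edge e has two endpoints end1 e, end2 e (parallel edges allowed). *)

(* degree: each end of an edge at v contributes 1 (loops would count twice) *)
Definition deg (V E : finType) (end1 end2 : E -> V) (v : V) : nat :=
  #|[set e | end1 e == v]| + #|[set e | end2 e == v]|.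

Definition bipartite (V E : finType) (end1 end2 : E -> V) : Prop :=
  exists c : V -> bool, forall e, c (end1 e) != c (end2 e).

Definition otail (V E : finType) (end1 end2 : E -> V) (o : E -> bool) (e : E) : V :=
  if o e then end1 e else end2 e.

Definition outdeg (V E : finType) (end1 end2 : E -> V) (W : {set E}) (o : E -> bool)
  (v : V) : nat :=
  #|[set e in W | otail end1 end2 o e == v]|.

(* Main.v *)
Require Import Defs.
From mathcomp Require Import all_boot zify.

Section K.
Variables (V E : finType).

Definition tl (f1 f2 : E -> V) (o : E -> bool) e := if o e then f1 e else f2 e.
Definition hd (f1 f2 : E -> V) (o : E -> bool) e := if o e then f2 e else f1 e.
Definition cnt (A : {set E}) (g : E -> V) v := \sum_(e in A) (g e == v).

Lemma cntD1 (A : {set E}) (g : E -> V) v x : x \in A -> cnt A g v = (g x == v) + cnt (A :\ x) g v.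
Proof.
move=> Hx; rewrite /cnt (bigD1 x) //=; congr (_ + _).
by apply: eq_bigl => e; rewrite !inE andbC.
Qed.

Lemma cnt_ext (A : {set E}) (g g' : E -> V) v : (forall e, e \in A -> g e = g' e) -> cnt A g v = cnt A g' v.
Proof. by move=> H; apply: eq_bigr => e /H ->. Qed.

Lemma cnt0 (g : E -> V) v : cnt set0 g v = 0.
Proof. by rewrite /cnt big_set0. Qed.

Definition balanced (A : {set E}) (f1 f2 : E -> V) o := forall v,
  cnt A (tl f1 f2 o) v <= cnt A (hd f1 f2 o) v + 1 /\
  cnt A (hd f1 f2 o) v <= cnt A (tl f1 f2 o) v + 1.

Lemma key n : forall (A : {set E}), #|A| <= n -> forall f1 f2, exists o, balanced A f1 f2 o.
Proof.
elim: n => [|n IH] A HA f1 f2.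
  exists (fun _ => true) => v.
  have -> : A = set0 by apply/eqP; rewrite -cards_eq0; lia.
  by rewrite !cnt0.
case: (set_0Vmem A) => [->|[e1 He1]].
  by exists (fun _ => true) => v; rewrite !cnt0.
set a := f1 e1; set b := f2 e1.
case: (pickP [pred e | (e \in A :\ e1) && ((f1 e == b) || (f2 e == b))]) => [e2 /andP[He2 Hb] | Hno].
- set c := if f1 e2 == b then f2 e2 else f1 e2.
  set f2' := fun e => if e == e1 then c else f2 e.
  move: He2; rewrite in_setD1 => /andP[ne21 He2].
  have Hcard : #|A :\ e2| <= n by move: HA; rewrite (cardsD1 e2) He2; lia.
  have [o' Ho'] := IH _ Hcard f1 f2'.
  exists (fun e => if e == e2 then (o' e1 == (f1 e2 == b)) else o' e) => v.
  have He1' : e1 \in A :\ e2 by rewrite in_setD1 eq_sym ne21.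
  have He2' : e2 \in A :\ e1 by rewrite in_setD1 ne21.
  have Hset : A :\ e2 :\ e1 = A :\ e1 :\ e2.
    by apply/setP => x; rewrite !inE andbCA.
  have [H1 H2] := Ho' v.
  move: H1 H2.
  rewrite !(cntD1 _ _ _ _ He1') !(cntD1 _ _ _ _ He1) !(cntD1 _ _ _ _ He2') Hset.
  set R := A :\ e1 :\ e2.
  have E1 : forall e, e \in R -> tl f1 f2' o' e =
     tl f1 f2 (fun e => if e == e2 then (o' e1 == (f1 e2 == b)) else o' e) e.
    move=> e; rewrite !inE => /and3P[n2 n1 _].
    by rewrite /tl /f2' (negbTE n1) (negbTE n2).
  have E2 : forall e, e \in R -> hd f1 f2' o' e =
     hd f1 f2 (fun e => if e == e2 then (o' e1 == (f1 e2 == b)) else o' e) e.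
    move=> e; rewrite !inE => /and3P[n2 n1 _].
    by rewrite /hd /f2' (negbTE n1) (negbTE n2).
  rewrite (cnt_ext _ _ _ _ E1) (cnt_ext _ _ _ _ E2).
  rewrite /tl /hd /f2' !eqxx [e1 == e2]eq_sym (negbTE ne21) -/a -/b.
  rewrite /c; case: (o' e1); case: eqP Hb => [-> _|_ /= /eqP ->] /=; lia.
- have Hcard : #|A :\ e1| <= n by move: HA; rewrite (cardsD1 e1) He1; lia.
  have [o' Ho'] := IH _ Hcard f1 f2.
  set ob := cnt (A :\ e1) (tl f1 f2 o') a <= cnt (A :\ e1) (hd f1 f2 o') a.
  exists (fun e => if e == e1 then ob else o' e) => v.
  rewrite !(cntD1 _ _ _ _ He1).
  have E1 : forall e, e \in A :\ e1 -> tl f1 f2 (fun e => if e == e1 then ob else o' e) e = tl f1 f2 o' e.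
    by move=> e; rewrite !inE => /andP[n1 _]; rewrite /tl (negbTE n1).
  have E2 : forall e, e \in A :\ e1 -> hd f1 f2 (fun e => if e == e1 then ob else o' e) e = hd f1 f2 o' e.
    by move=> e; rewrite !inE => /andP[n1 _]; rewrite /hd (negbTE n1).
  rewrite (cnt_ext _ _ _ _ E1) (cnt_ext _ _ _ _ E2).
  clear E1 E2.
  have Hb0 : forall g, (forall e, g e = f1 e \/ g e = f2 e) -> cnt (A :\ e1) g b = 0.
    move=> g Hg; apply: big1 => e He.
    have := Hno e; rewrite /= He /=.
    by case: (Hg e) => ->; case: (f1 e == b); case: (f2 e == b).
  have Htl : forall e, tl f1 f2 o' e = f1 e \/ tl f1 f2 o' e = f2 e.
    by move=> e; rewrite /tl; case: (o' e); [left|right].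
  have Hhd : forall e, hd f1 f2 o' e = f1 e \/ hd f1 f2 o' e = f2 e.
    by move=> e; rewrite /hd; case: (o' e); [right|left].
  have -> : tl f1 f2 (fun e => if e == e1 then ob else o' e) e1 = if ob then a else b.
    by rewrite /tl eqxx.
  have -> : hd f1 f2 (fun e => if e == e1 then ob else o' e) e1 = if ob then b else a.
    by rewrite /hd eqxx.
  move: (Ho' v).
  case: (eqVneq a v) => [<-|nav].
    case: (eqVneq b a) => [->|nba].
      by case: ob; rewrite eqxx /=; lia.
    case Hob: ob; rewrite ?eqxx ?(negbTE nba) /=; [move/idP: Hob | move/negbT: Hob]; rewrite /ob -?ltnNge; lia.
  case: (eqVneq b v) => [ebv|nbv].
    subst v; rewrite !Hb0 //; case: ob; rewrite ?eqxx (negbTE nav) /=; lia.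
  by case: ob; rewrite (negbTE nav) (negbTE nbv) /=; lia.
Qed.

Lemma cnt_card (A : {set E}) (g : E -> V) v : cnt A g v = #|[set e in A | g e == v]|.
Proof.
rewrite -sum1_card /cnt big_mkcond [RHS]big_mkcond /=; apply: eq_bigr => e _.
by rewrite !inE; case: (e \in A); case: (g e == v).
Qed.

Lemma cntT_card (g : E -> V) v : cnt setT g v = #|[set e | g e == v]|.
Proof. by rewrite cnt_card; apply: eq_card => e; rewrite !inE. Qed.

Lemma cnt_sum f1 f2 o v : cnt setT (tl f1 f2 o) v + cnt setT (hd f1 f2 o) v =
  cnt setT f1 v + cnt setT f2 v.
Proof.
rewrite /cnt -!big_split /=; apply: eq_bigr => e _.
by rewrite /tl /hd; case: (o e); rewrite addnC.
Qed.

Lemma sub_card (A : {set E}) k : k <= #|A| -> exists B : {set E}, B \subset A /\ #|B| = k.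
Proof.
elim: k => [|k IH] Hk; first by exists set0; rewrite sub0set cards0.
have [B [HB cB]] := IH (ltnW Hk).
have [x /setDP [xA xB]] : exists x, x \in A :\: B.
  apply/set0Pn; rewrite -card_gt0 cardsD.
  have -> : #|A :&: B| = #|B| by rewrite (setIidPr HB).
  by move: Hk; rewrite -cB; lia.
exists (x |: B); split; first by rewrite subUset sub1set xA HB.
by rewrite cardsU1 xB cB.
Qed.
End K.

Theorem claim2p2 (V E : finType) (end1 end2 : E -> V)
  (hbip : bipartite end1 end2) (u : V -> nat)
  (hu : forall v, 2 * u v <= deg end1 end2 v) :
  exists (W : {set E}) (o : E -> bool),
    forall v, outdeg end1 end2 W o v = u v.
Proof.
have [o Ho] := @key V E _ _ (leqnn #|[set: E]|) end1 end2.
have Hle : forall v, u v <= #|[set e | otail end1 end2 o e == v]|.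
  move=> v; have := hu v; have := Ho v; have := cnt_sum V E end1 end2 o v.
  rewrite /deg -!cntT_card.
  have -> : otail end1 end2 o = tl V E end1 end2 o by [].
  lia.
have [B HB] := fin_all_exists (fun v => @sub_card E _ _ (Hle v)).
exists (\bigcup_v B v), o => v.
have [sB cB] := HB v.
rewrite /outdeg -cB; apply: eq_card => e; rewrite !inE.
apply/andP/idP => [[/bigcupP [w _ Hw] /eqP He]|Hv].
  have [sBw _] := HB w.
  by move: (subsetP sBw _ Hw); rewrite inE -He => /eqP ->.
split; first by apply/bigcupP; exists v.
by move: (subsetP sB _ Hv); rewrite inE.
Qed.
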